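(* Let $T$ be a generalized causal team over a signature $\sigma=(\mathrm{Dom},\mathrm{Ran})$, and let $\mu:=\bigwedge_{V\in\mathrm{Dom}}\bigwedge_{\mathbf w\in\mathrm{Ran}(\mathbf W_V)}\big(\mathbf W_V=\mathbf w\;\Box\!\!\rightarrow{=}(V)\big)$, where $\mathbf W_V$ lists $\mathrm{Dom}\setminus\{V\}$, and $\chi:=\mu\wedge\bigwedge_{V\in\mathrm{Dom}}{=}(V)$. (i) If $|T^-|=1$, then $T\models^g\mu$ iff $T$ is uniform. (ii) $T\models^g\chi$ iff $|T/_{\approx}|\leq 1$.
   Context: A signature $\sigma$: $\mathrm{Dom}$ nonempty finite set of variables, each with nonempty finite range $\mathrm{Ran}(X)$; $\mathbf X=\mathbf x$ abbreviates $X_1=x_1\wedge\dots\wedge X_n=x_n$ ($\mathbf x\in\prod\mathrm{Ran}(X_i)$), inconsistent if it contains $X=x,X=x'$ with $x\ne x'$. ${=}(V)$ is the constancy atom (dependence atom with empty first component). Systems of functions $\mathcal F$: for each $V\in\mathrm{En}(\mathcal F)\subseteq\mathrm{Dom}$ parents $PA^{\mathcal F}_V\subseteq\mathrm{Dom}\setminus\{V\}$ and $\mathcal F_V:\mathrm{Ran}(PA^{\mathcal F}_V)\to\mathrm{Ran}(V)$; $\mathrm{Ex}(\mathcal F)=\mathrm{Dom}\setminus\mathrm{En}(\mathcal F)$; only recursive systems (acyclic parent graph). An assignment $s$ ($s(X)\in\mathrm{Ran}(X)$) is compatible with $\mathcal F$ if $s(V)=\mathcal F_V(s(PA^{\mathcal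 F}_V))$ for $V\in\mathrm{En}(\mathcal F)$. A generalized causal team is a set $T$ of compatible pairs $(s,\mathcal F)$; $T^-=\{s:(s,\mathcal F)\in T\}$. For consistent $\mathbf X=\mathbf x$: $\mathcal F_{\mathbf X=\mathbf x}$ restricts $\mathcal F$ to $\mathrm{En}(\mathcal F)\setminus\mathbf X$; $s^{\mathcal F}_{\mathbf X=\mathbf x}$: $X_i\mapsto x_i$, $V\mapsto s(V)$ on $\mathrm{Ex}(\mathcal F)\setminus\mathbf X$, $V\mapsto\mathcal F_V(s^{\mathcal F}_{\mathbf X=\mathbf x}(PA^{\mathcal F}_V))$ on $\mathrm{En}(\mathcal F)\setminus\mathbf X$; $T_{\mathbf X=\mathbf x}=\{(s^{\mathcal F}_{\mathbf X=\mathbf x},\mathcal F_{\mathbf X=\mathbf x}):(s,\mathcal F)\in T\}$. $\models^g$: $T\models{=}(V)$ iff $s(V)=s'(V)$ for all $s,s'\in T^-$; $\wedge$ classical; $T\models\mathbf X=\mathbf x\;\Box\!\!\rightarrow\varphi$ iff $\mathbf X=\mathbf x$ inconsistent or $T_{\mathbf X=\mathbf x}\models\varphi$. $\mathrm{Cn}(\mathcal F)=\{V\in\mathrm{En}(\mathcal F):\mathcal F_V\text{ constant}\}$; $\mathcal F_V\sim\mathcal G_V$ iff $\mathcal F_V(\mathbf x\mathbf y)=\mathcal G_V(\mathbf x\mathbf z)$ for all $\mathbf x\in\mathrm{Ran}(PA^{\mathcal F}_V\cap PA^{\mathcal G}_V)$, $\mathbf y\in\mathrm{Ran}(PA^{\mathcal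 F}_V\setminus PA^{\mathcal G}_V)$, $\mathbf z\in\mathrm{Ran}(PA^{\mathcal G}_V\setminus PA^{\mathcal F}_V)$; $\mathcal F\sim\mathcal G$ iff $\mathrm{En}(\mathcal F)\setminus\mathrm{Cn}(\mathcal F)=\mathrm{En}(\mathcal G)\setminus\mathrm{Cn}(\mathcal G)$ and $\mathcal F_V\sim\mathcal G_V$ for each such $V$. $T$ is uniform if $\mathcal F\sim\mathcal G$ for all $(s,\mathcal F),(t,\mathcal G)\in T$. On pairs, $(s,\mathcal F)\approx(t,\mathcal G)$ iff $s=t$ and $\mathcal F\sim\mathcal G$; $T/_{\approx}$ is the set of $\approx$-equivalence classes of elements of $T$. *)

(* Defs.v *)
From mathcomp Require Import all_boot.
Set Implicit Arguments.
Unset Strict Implicit.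
Unset Printing Implicit Defensive.

Section CausalTeams.
Variables (D : finType) (Ran : D -> finType).

Definition assignment := forall X : D, Ran X.

(* A system of functions: endogenous variables [en], parents [pa V], and
   F_V represented as a function of a full assignment that only depends on
   the values of the parents (see well_formed).  pa/f on exogenous
   variables are irrelevant dummy data. *)
Record system := Sys {
  en : {set D};
  pa : D -> {set D};
  fn : forall V : D, assignment -> Ran V
}.

Definition pa_edge (F : system) : rel D :=
  fun X V => (V \in en F) && (X \in pa F V).

Definition recursive (F : system) : Prop :=
  forall (V : D) (p : seq D), path (pa_edge F) V p -> last V p = V -> p = [::].

Definition well_formed (F : system) : Prop :=
  [/\ forall V, V \in en F -> V \notin pa F V,
      forall V (s t : assignment), V \in en F ->
        (forall X, X \in pa F V -> s X = t X) -> fn F V s = fn F V t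
    & recursive F].

Definition compatible (s : assignment) (F : system) : Prop :=
  forall V, V \in en F -> s V = fn F V s.

Definition team := assignment * system -> Prop.

Definition gcteam (T : team) : Prop :=
  forall p, T p -> well_formed p.2 /\ compatible p.1 p.2.

(* Interventions X = x: X a set of variables, x an assignment whose values
   on X are the intervened values (always consistent). *)
Definition interv_sys (F : system) (X : {set D}) : system :=
  Sys (en F :\: X) (pa F) (fn F).

Definition interv_step (F : system) (X : {set D}) (x s : assignment)
  (t : assignment) : assignment :=
  fun V => if V \in X then x V
           else if V \in en F then fn F V t else s V.

(* s^F_{X=x}: for a recursive F, #|D| iterations reach the unique solution *)
Definition interv_assign (s : assignment) (F : system) (X : {set D})
  (x : assignment) : assignment :=
  iter #|D| (interv_step F X x s) s.

Definition interv_team (T : team) (X : {set D}) (x : assignment) : team :=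
  fun p => exists q, T q /\ p = (interv_assign q.1 q.2 X x, interv_sys q.2 X).

Definition sat_const (T : team) (V : D) : Prop :=
  forall p q, T p -> T q -> p.1 V = q.1 V.

(* T |= X = x []-> phi  (phi given semantically as a team property) *)
Definition sat_cf (T : team) (X : {set D}) (x : assignment)
  (phi : team -> Prop) : Prop := phi (interv_team T X x).

(* mu := /\_V /\_{w in Ran(W_V)} (W_V = w []-> =(V)), W_V = Dom \ {V};
   w ranges over full assignments, only their values on W_V matter. *)
Definition sat_mu (T : team) : Prop :=
  forall (V : D) (w : assignment),
    sat_cf T (~: [set V]) w (fun T' => sat_const T' V).

Definition sat_chi (T : team) : Prop :=
  sat_mu T /\ forall V : D, sat_const T V.

Definition is_const_fn (F : system) (V : D) : Prop :=
  V \in en F /\ forall s t : assignment, fn F V s = fn F V t.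

Definition nonconst_en (F : system) (V : D) : Prop :=
  V \in en F /\ ~ is_const_fn F V.

Definition sim_fn (F G : system) (V : D) : Prop :=
  forall s t : assignment,
    (forall X, X \in pa F V :&: pa G V -> s X = t X) ->
    fn F V s = fn G V t.

Definition sim_sys (F G : system) : Prop :=
  (forall V, nonconst_en F V <-> nonconst_en G V) /\
  (forall V, nonconst_en F V -> sim_fn F G V).

Definition uniform (T : team) : Prop :=
  forall p q, T p -> T q -> sim_sys p.2 q.2.

Definition team_minus (T : team) (s : assignment) : Prop :=
  exists F, T (s, F).

Definition minus_card1 (T : team) : Prop :=
  exists s0, forall s, team_minus T s <-> s = s0.

Definition approx (p q : assignment * system) : Prop :=
  p.1 = q.1 /\ sim_sys p.2 q.2.

Definition eqclass (T : team) (p : assignment * system) : team :=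
  fun q => T q /\ approx p q.

Definition is_class (T : team) (C : team) : Prop :=
  exists p, T p /\ forall q, C q <-> eqclass T p q.

Definition quot_card_le1 (T : team) : Prop :=
  forall C1 C2, is_class T C1 -> is_class T C2 -> forall q, C1 q <-> C2 q.

End CausalTeams.

(* Main.v *)
From Stdlib Require Import Classical FunctionalExtensionality.
Require Import Defs.
From mathcomp Require Import all_boot.

Section Aux.
Variables (D : finType) (Ran : D -> finType).

Lemma iter_agree (F : system Ran) (X : {set D}) (x s : assignment Ran) k (Y : D) :
  0 < k -> Y \in X -> iter k (interv_step F X x s) s Y = x Y.
Proof. by case: k => // k _ HY; rewrite iterS /interv_step HY. Qed.

Lemma ia_exo (s : assignment Ran) (F : system Ran) (X : {set D}) (x : assignment Ran) (V : D) :
  V \notin X -> V \notin en F -> interv_assign s F X x V = s V.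
Proof.
move=> HX HF; rewrite /interv_assign.
have : 0 < #|D| by apply/card_gt0P; exists V.
by case: #|D| => // k _; rewrite iterS /interv_step (negbTE HX) (negbTE HF).
Qed.

Lemma ia_endo (s : assignment Ran) (F : system Ran) (X : {set D}) (x : assignment Ran) (V : D) :
  well_formed F -> V \notin X -> V \in en F -> pa F V \subset X ->
  interv_assign s F X x V = fn F V x.
Proof.
move=> [_ Hwf _] HX HF Hsub; rewrite /interv_assign.
have : 0 < #|D| by apply/card_gt0P; exists V.
case E: #|D| => [//|k] _; rewrite iterS /interv_step (negbTE HX) HF.
apply: Hwf => // Y HY.
have HYX : Y \in X by apply: (subsetP Hsub).
apply: iter_agree; last exact: HYX.
case: k E => // E.
have: #|[set V; Y]| <= #|D| by apply: subset_leq_card; apply/subsetP.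
rewrite cards2 E.
have -> : (V != Y) by apply/eqP => EVY; rewrite EVY HYX in HX.
by [].
Qed.

Lemma pa_sub (F : system Ran) V : well_formed F -> V \in en F -> pa F V \subset ~: [set V].
Proof.
move=> [H _ _] HV; apply/subsetP => Y HY; rewrite !inE.
by apply/eqP => E; subst Y; move: (H V HV); rewrite HY.
Qed.

Lemma val_nonconst (s : assignment Ran) (F : system Ran) (V : D) (w : assignment Ran) :
  well_formed F -> nonconst_en F V ->
  interv_assign s F (~: [set V]) w V = fn F V w.
Proof.
move=> Hwf [HV _]; apply: ia_endo => //; first by rewrite !inE eqxx.
exact: pa_sub.
Qed.

Lemma val_const (s : assignment Ran) (F : system Ran) (V : D) (w : assignment Ran) :
  well_formed F -> compatible s F -> ~ nonconst_en F V ->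
  interv_assign s F (~: [set V]) w V = s V.
Proof.
move=> Hwf Hc Hn.
case HV: (V \in en F); last by apply: ia_exo; rewrite ?inE ?eqxx ?HV.
have Hk : forall a b, fn F V a = fn F V b.
  apply: NNPP => Hk; apply: Hn; split => // [[_ Hk']]; exact: Hk.
rewrite ia_endo ?inE ?eqxx //; last exact: pa_sub.
by rewrite [in RHS](Hc V HV); apply: Hk.
Qed.

Lemma unif_mu (T : team Ran) : gcteam T -> uniform T ->
  (forall p q, T p -> T q -> p.1 = q.1) -> sat_mu T.
Proof.
move=> HT Hu Hs V w p q [p0 [Hp0 ->]] [q0 [Hq0 ->]] /=.
have [Hwp Hcp] := HT _ Hp0; have [Hwq Hcq] := HT _ Hq0.
have [Hiff Hsim] := Hu _ _ Hp0 Hq0.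
case: (classic (nonconst_en p0.2 V)) => Hn.
  rewrite val_nonconst // val_nonconst //; last by apply/Hiff.
  by apply: Hsim.
rewrite val_const // val_const //; first by rewrite (Hs _ _ Hp0 Hq0).
by move/Hiff.
Qed.

Lemma mu_nc (T : team Ran) (s : assignment Ran) F G V :
  gcteam T -> sat_mu T -> T (s, F) -> T (s, G) ->
  nonconst_en F V -> nonconst_en G V.
Proof.
move=> HT Hm HF HG Hn; apply: NNPP => Hn'.
have [HwF HcF] := HT _ HF; have [HwG HcG] := HT _ HG.
case: (Hn) => _; apply; split; first by case: Hn.
have Hk : forall w, fn F V w = s V.
  move=> w; rewrite -(val_nonconst s F V w HwF Hn) -(val_const s G V w HwG HcG Hn').
  apply: (Hm V w (interv_assign s F (~: [set V]) w, interv_sys F (~: [set V]))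
                 (interv_assign s G (~: [set V]) w, interv_sys G (~: [set V]))).
    by exists (s, F).
  by exists (s, G).
by move=> a b; rewrite !Hk.
Qed.

Lemma mu_unif (T : team Ran) : gcteam T -> sat_mu T ->
  (forall p q, T p -> T q -> p.1 = q.1) -> uniform T.
Proof.
move=> HT Hm Hs [s F] [t G] HF HG /=.
have E : s = t by apply: (Hs _ _ HF HG).
subst t.
have [HwF HcF] := HT _ HF; have [HwG HcG] := HT _ HG.
split.
  move=> V /=; split; [exact: (mu_nc _ _ _ _ _ HT Hm HF HG)| exact: (mu_nc _ _ _ _ _ HT Hm HG HF)].
move=> V Hn a b Hab.
have HnG := mu_nc _ _ _ _ _ HT Hm HF HG Hn.
have Heq : forall u, fn F V u = fn G V u.
  move=> u; rewrite -(val_nonconst s F V u HwF Hn) -(val_nonconst s G V u HwG HnG).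
  apply: (Hm V u (interv_assign s F (~: [set V]) u, interv_sys F (~: [set V]))
                 (interv_assign s G (~: [set V]) u, interv_sys G (~: [set V]))).
    by exists (s, F).
  by exists (s, G).
pose u : assignment Ran := fun X => if X \in pa F V then a X else b X.
case: HwF => _ HwF _; case: HwG => _ HwG _.
have [HVF _] := Hn; have [HVG _] := HnG.
transitivity (fn F V u).
  by apply: HwF => // X HX; rewrite /u HX.
rewrite Heq; apply: HwG => // X HX; rewrite /u.
case HXF: (X \in pa F V) => //.
by apply: Hab; rewrite inE HXF HX.
Qed.

Lemma approx_refl (p : assignment Ran * system Ran) : well_formed p.2 -> approx p p.
Proof.
move=> [_ Hwf _]; split => //; split => // V [HV _] a b Hab.
by apply: Hwf => // X HX; apply: Hab; rewrite setIid.
Qed.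

End Aux.

Theorem lemma5p2 (D : finType) (Ran : D -> finType)
  (HD : 0 < #|D|) (HRan : forall X : D, 0 < #|Ran X|)
  (T : team Ran) (HT : gcteam T) :
  (minus_card1 T -> (sat_mu T <-> uniform T)) /\
  (sat_chi T <-> quot_card_le1 T).
Proof.
split.
  move=> [s0 Hs0].
  have Hs : forall p q, T p -> T q -> p.1 = q.1.
    move=> [s F] [t G] HF HG /=.
    rewrite (proj1 (Hs0 s)); last by exists F.
    by rewrite (proj1 (Hs0 t)); last by exists G.
  split => H; [exact: (mu_unif _ _ _ HT H Hs) | exact: (unif_mu _ _ _ HT H Hs)].
split.
  move=> [Hm Hc].
  have Hs : forall p q, T p -> T q -> p.1 = q.1.
    move=> p q Hp Hq; apply: functional_extensionality_dep => V; exact: Hc.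
  have Hu := mu_unif _ _ _ HT Hm Hs.
  move=> C1 C2 [p1 [Hp1 HC1]] [p2 [Hp2 HC2]] q.
  rewrite HC1 HC2 /eqclass /approx.
  split => -[Hq _]; split => //; split; try exact: Hs; exact: Hu.
move=> Hq.
have Hap : forall p q, T p -> T q -> approx p q.
  move=> p q Hp HqT.
  have Hc1 : is_class T (eqclass T p) by exists p.
  have Hc2 : is_class T (eqclass T q) by exists q.
  have := proj2 (Hq _ _ Hc1 Hc2 q).
  case => //; split => //; apply: approx_refl; exact: (proj1 (HT _ HqT)).
have Hs : forall p q, T p -> T q -> p.1 = q.1 by move=> p q Hp HqT; case: (Hap p q Hp HqT).
have Hu : uniform T by move=> p q Hp HqT; case: (Hap p q Hp HqT).
split; first exact: (unif_mu _ _ _ HT Hu Hs).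
by move=> V p q Hp HqT; rewrite (Hs p q Hp HqT).
Qed.
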